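(* Define transition probabilities $P(n\searrow m)$ on $\mathbb{N}_{\ge1}=\{2,3,4,\dots\}$ as follows. If $n$ is composite and not a prime power, set $P(n\searrow n/q)=\frac{\Lambda(q)}{\log n}$ for every divisor $q>1$ of $n$, and $P(n\searrow m)=0$ for all other $m$. If $n=p$ is prime, set $P(p\searrow p)=1$ and $P(p\searrow m)=0$ for $m\ne p$. If $n=p^k$ with $p$ prime and $k\ge2$, set $P(n\searrow n/p^j)=\frac1k$ for $j=1,\dots,k-2$, $P(n\searrow p)=\frac2k$, and $P(n\searrow m)=0$ for all other $m$. Let $\nu_0(n)=\frac{1}{n\log n}$. Then for every $m\in\mathbb{N}_{\ge1}$, $$\sum_{q>1}\nu_0(mq)\,P(mq\searrow m)\le\nu_0(m).$$
   Context: $\Lambda$ is the von Mangoldt function: $\Lambda(q)=\log p$ if $q=p^j$ for a prime $p$ and $j\ge1$, and $\Lambda(q)=0$ otherwise. The sum is over integers $q\ge2$. *)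

(* Defs.v *)
From HB Require Import structures.
From mathcomp Require Import all_boot all_order all_algebra.
From mathcomp Require Import all_classical all_reals all_analysis.
Set Implicit Arguments. Unset Strict Implicit. Unset Printing Implicit Defensive.
Import Order.TTheory GRing.Theory Num.Theory.
Local Open Scope ring_scope.

(* von Mangoldt: Lambda q = log p if q = p^j (p prime, j >= 1), else 0.
   Written as a sum over all pairs (p, j) with p <= q, 1 <= j <= q, q = p^j;
   at most one such pair exists, so this is literally the definition. *)
Definition vonMangoldt (R : realType) (q : nat) : R :=
  \sum_(p < q.+1 | prime p) \sum_(1 <= j < q.+1 | q == (p ^ j)%N) ln (p%:R : R).

Definition is_ppow2 (n : nat) : bool :=
  [exists p : 'I_n.+1, [exists k : 'I_n.+1, prime p && (1 < k)%N && (n == p ^ k)%N]].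

Definition trans (R : realType) (n m : nat) : R :=
  if prime n then (m == n)%:R
  else if is_ppow2 n then
    let p := pdiv n in let k := logn p n in
    if m == p then 2 / k%:R
    else if has (fun j => m == n %/ p ^ j)%N (iota 1 (k - 2)) then 1 / k%:R
    else 0
  else
    \sum_(2 <= q < n.+1 | (q %| n)%N && (m == n %/ q)%N) vonMangoldt R q / ln (n%:R : R).

Definition nu0 (R : realType) (n : nat) : R := 1 / (n%:R * ln (n%:R : R)).

(* Main.v *)
Set Warnings "-notation-overridden,-ambiguous-paths,-notation-incompatible-prefix".
From HB Require Import structures.
From mathcomp Require Import all_boot all_order all_algebra.
From mathcomp Require Import all_classical all_reals all_analysis.
From mathcomp Require Import ring lra.
Require Import Defs.
Import Order.TTheory GRing.Theory Num.Theory.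
Set Implicit Arguments. Unset Strict Implicit.
Local Open Scope ring_scope.
Lemma ln_le_sub1 (R : realType) (x : R) : 0 < x -> ln x <= x - 1.
Proof.
move=> x0; have := @le_ln1Dx R (x - 1).
have -> : 1 + (x - 1) = x by ring.
apply; lra.
Qed.

Lemma lnB (R : realType) (x y : R) : 0 < x -> 0 < y -> ln x - ln y = ln (x / y).
Proof.
move=> x0 y0; rewrite lnM ?posrE ?invr_gt0 // lnV ?posrE //.
Qed.

Lemma ln_mono (R : realType) (x y : R) : 0 < x -> x <= y -> ln x <= ln y.
Proof.
move=> x0 xy; rewrite ler_ln ?posrE //; exact: lt_le_trans xy.
Qed.

Lemma chord (R : realType) (L a b e t : R) : 0 < L -> 0 <= a -> a <= b -> b <= e ->
  0 <= t -> e - a <= t * (b - a) ->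
  1/(L+a)^+2 - 1/(L+e)^+2 <= t * (1/(L+a)^+2 - 1/(L+b)^+2).
Proof.
move=> L0 a0 ab be t0 h.
have wa : 0 < L + a by lra.
have wb : 0 < L + b by lra.
have we : 0 < L + e by lra.
pose s y := (1/(L+a) + 1/(L+y)) / ((L+a)*(L+y)).
have sE : forall y, 0 < L + y -> 1/(L+a)^+2 - 1/(L+y)^+2 = (y - a) * s y.
  move=> y wy; rewrite /s; field; apply/andP; split; rewrite gt_eqF //.
have s0 : 0 <= s e by rewrite /s divr_ge0 // ?addr_ge0 ?divr_ge0 ?mulr_ge0 // ltW.
have seb : s e <= s b.
  rewrite /s; apply: ler_pM.
  - by rewrite addr_ge0 // divr_ge0 // ltW.
  - by rewrite invr_ge0 mulr_ge0 // ltW.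
  - by rewrite lerD2l !div1r lef_pV2 ?posrE // lerD2l.
  - rewrite lef_pV2 ?posrE ?mulr_gt0 //; by rewrite ler_pM2l // lerD2l.
rewrite sE // sE //.
have h1 : (e - a) * s e <= t * (b - a) * s e by rewrite ler_wpM2r.
apply: (le_trans h1); rewrite -mulrA ler_wpM2l //; rewrite ler_wpM2l //; lra.
Qed.

Definition VV (R : realType) (L x : R) : R := L * (1 / (L + ln x)^+2).

Lemma ln_bern (R : realType) (x : R) (D : nat) : 1 <= x ->
  ln (x + D%:R) - ln x <= D%:R * (ln (x+1) - ln x).
Proof.
move=> x1; elim: D => [|D IH]; first by rewrite addr0 subrr mul0r.
have xD : 0 < x + D%:R by rewrite ltr_wpDr // (lt_le_trans ltr01).
have x0 : 0 < x by rewrite (lt_le_trans ltr01).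
have h : ln (x + D.+1%:R) - ln (x + D%:R) <= ln (x+1) - ln x.
  have p1 : 0 < x + D.+1%:R by rewrite ltr_wpDr // ltW.
  have p2 : 0 < x + 1 by rewrite ltr_wpDr // ltW.
  rewrite (lnB p1 xD) (lnB p2 x0); apply: ln_mono; first exact: divr_gt0.
  have -> : (x + D.+1%:R) / (x + D%:R) = 1 + 1 / (x + D%:R).
    by rewrite -natr1; field; rewrite gt_eqF.
  have -> : (x + 1) / x = 1 + 1 / x by field; rewrite gt_eqF.
  by rewrite lerD2l !div1r lef_pV2 ?posrE // lerDl.
rewrite -natr1 mulrDl mul1r.
have -> : ln (x + (D%:R + 1)) - ln x = (ln (x + (D%:R+1)) - ln (x + D%:R)) + (ln (x + D%:R) - ln x) by ring.
rewrite natr1; lra.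
Qed.

Lemma VV_step (R : realType) (L x : R) (D : nat) : 0 < L -> 1 <= x -> (0 < D)%N ->
  VV L x - VV L (x + D%:R) <= D%:R * (VV L x - VV L (x+1)).
Proof.
move=> L0 x1 D0.
have x0 : 0 < x by rewrite (lt_le_trans ltr01).
have a0 : 0 <= ln x by rewrite ln_ge0.
have ab : ln x <= ln (x+1) by apply: ln_mono => //; rewrite lerDl.
have be : ln (x+1) <= ln (x + D%:R).
  by apply: ln_mono; [rewrite addr_gt0 | rewrite lerD2l ler1n].
have := chord L0 a0 ab be (ler0n _ D) (ln_bern D x1).
rewrite /VV -!mulrBr mulrCA => h; rewrite [X in _ <= X]mulrCA ler_pM2l //; rewrite !mul1r in h *; exact: h.
Qed.

Lemma VV_anti (R : realType) (L x y : R) : 0 < L -> 1 <= x -> x <= y -> VV L y <= VV L x.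
Proof.
move=> L0 x1 xy.
have x0 : 0 < x by rewrite (lt_le_trans ltr01).
have a0 : 0 <= ln x by rewrite ln_ge0.
have ab : ln x <= ln y by apply: ln_mono.
rewrite /VV ler_pM2l // !div1r lef_pV2 ?posrE ?exprn_gt0 //; try lra.
by rewrite lerXn2r ?nnegrE; try lra.
Qed.

Lemma sumA (R : realType) (L : R) (d K : nat) : 0 < L -> (0 < d)%N ->
  (VV L d%:R - VV L (d * K.+1)%:R) / d%:R <=
  \sum_(1 <= k < K.+1) (VV L (d * k)%:R - VV L (d * k).+1%:R).
Proof.
move=> L0 d0; have dR : 0 < d%:R :> R by rewrite ltr0n.
elim: K => [|K IH]; first by rewrite muln1 subrr mul0r big_geq.
rewrite big_nat_recr //=.
have h := VV_step (x := (d * K.+1)%:R) L0 _ d0.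
have x1 : 1 <= (d * K.+1)%:R :> R by rewrite ler1n muln_gt0 d0.
have {}h := h x1.
rewrite -natrD -mulnSr in h.
have h2 : (VV L (d * K.+1)%:R - VV L (d * K.+2)%:R) / d%:R <=
    VV L (d * K.+1)%:R - VV L ((d * K.+1)%:R + 1).
  by rewrite ler_pdivrMr // mulrC.
rewrite -[X in _ <= _ + (_ - VV L X)]natr1.
apply: le_trans (lerD IH h2); rewrite -mulrDl; apply: ler_wpM2r; first by rewrite invr_ge0 ltW.
lra.
Qed.

Lemma termB (R : realType) (L a b : R) : 0 < L -> 0 <= a -> a <= b ->
  L * (1 / (L + b)^+2) * (b - a) <= L / (L + a) - L / (L + b).
Proof.
move=> L0 a0 ab.
have wa : 0 < L + a by lra.
have wb : 0 < L + b by lra.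
have -> : L / (L + a) - L / (L + b) = (L * (b - a)) * (1 / ((L + a) * (L + b))).
  by field; rewrite !gt_eqF.
rewrite mulrAC ler_wpM2l ?mulr_ge0 //; try lra.
rewrite !div1r lef_pV2 ?posrE ?mulr_gt0 ?exprn_gt0 // expr2 ler_pM2r //; lra.
Qed.

Lemma sumB_aux (R : realType) (L : R) (k : nat) : 0 < L ->
  \sum_(2 <= n < k.+3) (VV L n%:R - VV L n.+1%:R) * ln (n%:R : R)
  + VV L k.+3%:R * ln (k.+2%:R : R)
  <= 1 - (ln (2%:R : R))^+2 / (L + ln (2%:R:R))^+2 - L / (L + ln (k.+2%:R : R)).
Proof.
move=> L0.
have c0 : 0 < ln (2%:R : R).
  by rewrite -ln1 ltr_ln ?posrE // ltr1n.
elim: k => [|k IH].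
  rewrite big_nat1 /VV; set c := ln _.
  have -> : (L * (1 / (L + c) ^+ 2) - L * (1 / (L + ln (3%:R:R)) ^+ 2)) * c +
    L * (1 / (L + ln (3%:R:R)) ^+ 2) * c = L * c / (L + c)^+2 by ring.
  rewrite le_eqVlt; apply/orP; left; apply/eqP; field.
  by rewrite gt_eqF // addr_gt0.
rewrite big_nat_recr //=.
set S := \sum_(2 <= i < k.+3) _ in IH *.
have a0 : 0 <= ln (k.+2%:R : R) by rewrite ln_ge0 // ler1n.
have ab : ln (k.+2%:R : R) <= ln (k.+3%:R : R) by apply: ln_mono; rewrite ?ltr0n ?ler_nat.
have := termB L0 a0 ab; rewrite /VV in IH * => h.
lra.
Qed.

Lemma sum_widen (R : realType) (F : nat -> R) (P : pred nat) m n1 n2 :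
  (m <= n1)%N -> (n1 <= n2)%N -> (forall i, (n1 <= i < n2)%N -> P i -> F i = 0) ->
  \sum_(m <= i < n1 | P i) F i = \sum_(m <= i < n2 | P i) F i.
Proof.
move=> mn1 n12 h; rewrite (big_cat_nat mn1 n12) /= [X in _ = _ + X]big1_seq ?addr0 //.
move=> i /andP[Pi]; rewrite mem_index_iota => /h; exact.
Qed.

Lemma vM_nat (R : realType) q : vonMangoldt R q =
  \sum_(0 <= p < q.+1 | prime p) \sum_(1 <= j < q.+1 | q == (p ^ j)%N) ln (p%:R : R).
Proof. by rewrite /vonMangoldt big_mkord. Qed.

Lemma vM_ge0 (R : realType) q : 0 <= vonMangoldt R q.
Proof.
rewrite vM_nat; apply: sumr_ge0 => p pp; apply: sumr_ge0 => j _.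
by rewrite ln_ge0 // ler1n prime_gt0.
Qed.

Lemma vM_pow (R : realType) p j : prime p -> (0 < j)%N -> vonMangoldt R (p ^ j) = ln (p%:R : R).
Proof.
move=> pp j0; rewrite vM_nat.
have p1 := prime_gt1 pp.
rewrite (eq_bigr (fun p' => if p' == p then ln (p%:R : R) else 0)); last first.
  move=> p' pp'; case: eqP => [->|ne].
    rewrite (eq_bigl (fun j' => j' == j)); last by move=> j'; rewrite eq_sym eqn_exp2l.
    by rewrite big_nat1_eq j0 /= ltnS ltnW // ltn_expl.
  rewrite big_nat_cond; apply: big1 => j' /andP[/andP[j'0 _] /eqP e].
  exfalso; apply: ne; apply/eqP; rewrite -(dvdn_prime2 pp' pp).
  have : (p' %| p ^ j)%N by rewrite e dvdn_exp.
  by rewrite Euclid_dvdX // => /andP[].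
rewrite -big_mkcondr big_nat1_cond_eq pp andbT /=.
by rewrite ltnS -{1}(expn1 p) leq_pexp2l // ltnW.
Qed.

Lemma vM_widen (R : realType) d n : (0 < d)%N -> (d <= n)%N ->
  vonMangoldt R d = \sum_(0 <= p < n.+1 | prime p)
     \sum_(1 <= j < n.+1 | d == (p ^ j)%N) ln (p%:R : R).
Proof.
move=> d0 dn; rewrite vM_nat (@sum_widen _ _ _ 0 d.+1 n.+1) //; last first.
  move=> p /andP[dp _] pp; rewrite big_nat_cond; apply: big1 => j /andP[/andP[j1 _] /eqP e].
  exfalso; move: dp; rewrite e ltnNge => /negP; apply.
  by rewrite -{1}(expn1 p) leq_pexp2l // prime_gt0.
apply: eq_bigr => p pp; apply: sum_widen => // j /andP[dj _] /eqP e.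
exfalso; move: dj; rewrite e ltnNge => /negP; apply.
exact/ltnW/ltn_expl/prime_gt1.
Qed.

Lemma ln_prod_nat (R : realType) (r : seq nat) (P : pred nat) (F : nat -> nat) :
  (forall i, P i -> (0 < F i)%N) ->
  ln ((\prod_(i <- r | P i) F i)%N%:R : R) = \sum_(i <- r | P i) ln ((F i)%:R : R).
Proof.
move=> F0; elim: r => [|x r IH]; first by rewrite !big_nil ln1.
rewrite !big_cons; case: ifP => // Px.
rewrite natrM lnM ?IH // posrE ltr0n ?F0 //.
by apply: (big_ind (fun x => 0 < x)%N) => // a b Ha Hb; rewrite muln_gt0 Ha.
Qed.

Lemma ln_nat_logn (R : realType) n : (0 < n)%N ->
  ln (n%:R : R) = \sum_(0 <= p < n.+1 | prime p) ln (p%:R : R) *+ logn p n.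
Proof.
move=> n0; rewrite -{1}(partnT n0) /partn ln_prod_nat; last first.
  by move=> [|p] _; rewrite expn_gt0 // lognE.
rewrite big_mkcond [RHS]big_mkcond; apply: eq_bigr => p _ /=.
case: ifP => pp.
  by rewrite natrX lnXn // ltr0n prime_gt0.
by rewrite lognE pp /= expn0 ln1.
Qed.

Lemma vM_sum (R : realType) n : (0 < n)%N ->
  \sum_(0 <= d < n.+1 | (d %| n)%N) vonMangoldt R d = ln (n%:R : R).
Proof.
move=> n0.
rewrite (eq_bigr (fun d => \sum_(0 <= p < n.+1 | prime p)
     \sum_(1 <= j < n.+1) (if d == (p ^ j)%N then ln (p%:R : R) else 0))); last first.
  move=> d dn; rewrite (@vM_widen _ d n); last exact: dvdn_leq.
    by apply: eq_bigr => p _; rewrite big_mkcond.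
  by case: (posnP d) dn => // ->; rewrite dvd0n => /eqP nz; move: n0; rewrite nz.
rewrite exchange_big_nat /= ln_nat_logn //; apply: eq_bigr => p pp.
rewrite exchange_big_nat /=.
rewrite (eq_bigr (fun j => if (j <= logn p n)%N then ln (p%:R : R) else 0)); last first.
  move=> j _; rewrite -big_mkcondr big_nat1_cond_eq /=.
  case: ifP => h.
    by move: h => /andP[_ h]; rewrite -(pfactor_dvdn _ pp n0) h.
  rewrite -(pfactor_dvdn _ pp n0); case: ifP => // h2; move: h; rewrite h2 andbT ltnS.
  by rewrite dvdn_leq.
rewrite -big_mkcondr.
have ln_le : (logn p n <= n)%N.
  have := pfactor_dvdnn p n => /(dvdn_leq n0) h.
  exact/ltnW/(leq_trans _ h)/ltn_expl/prime_gt1.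
rewrite -(@sum_widen _ _ _ 1 (logn p n).+1 n.+1) //; last first.
  by move=> i /andP[h _]; rewrite leqNgt h.
rewrite big_mkcond /= (@eq_big_nat _ _ _ _ _ _ (fun _ => ln (p%:R : R))).
  by rewrite sumr_const_nat subn1.
by move=> i /andP[_]; rewrite ltnS => ->.
Qed.

Lemma sum_sub (R : realType) (F : nat -> R) (P Q : pred nat) a b c :
  (forall i, 0 <= F i) -> (forall i, (a <= i < b)%N -> P i -> (i < c)%N && Q i) ->
  \sum_(a <= i < b | P i) F i <= \sum_(0 <= i < c | Q i) F i.
Proof.
move=> F0 H.
rewrite (big_nat_widenl a 0) // (big_nat_widen 0 b (maxn b c)) ?leq_maxl //.
rewrite [X in _ <= X](big_nat_widen 0 c (maxn b c)) ?leq_maxr //.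
rewrite big_mkcond [X in _ <= X]big_mkcond /=; apply: ler_sum => i _; case: ifP => h; last by case: ifP.
move: h => /andP[/andP[Pi ai] ib].
by have /andP[ic Qi] := H i (introT andP (conj ai ib)) Pi; rewrite Qi ic.
Qed.

Lemma sum_mult (R : realType) (g : nat -> R) d X : (forall n, 0 <= g n) -> (1 < d)%N ->
  \sum_(1 <= k < (X %/ d).+1) g (d * k)%N <= \sum_(2 <= n < X.+1 | (d %| n)%N) g n.
Proof.
move=> g0 d1; have d0 : (0 < d)%N by exact: ltnW.
rewrite (eq_big_nat _ _ (F2 := fun k => \sum_(2 <= n < X.+1) (if n == (d * k)%N then g n else 0))); last first.
  move=> k /andP[k1 kX]; rewrite -big_mkcondr /= big_nat1_eq.
  have -> : (2 <= d * k < X.+1)%N.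
    apply/andP; split; first by rewrite (leq_trans d1) // leq_pmulr.
    by rewrite ltnS mulnC -leq_divRL.
  by [].
rewrite exchange_big_nat /= [X in _ <= X]big_mkcond; apply: ler_sum => n _.
case: ifP => dn.
  rewrite (eq_bigr (fun k => if k == (n %/ d)%N then g n else 0)); last first.
    move=> k _; congr (if _ then _ else _).
    rewrite -[X in X == _ = _](divnK dn) mulnC eqn_mul2l (negbTE (lt0n_neq0 d0)) /=.
    by rewrite eq_sym.
  rewrite -big_mkcond /= big_nat1_eq; case: ifP => //.
rewrite big1 // => k _; case: eqP => // e; move: dn; by rewrite e dvdn_mulr.
Qed.

Lemma exch (R : realType) (g : nat -> R) N X : (forall n, 0 <= g n) ->
  \sum_(2 <= d < N.+1) vonMangoldt R d * \sum_(1 <= k < (X %/ d).+1) g (d * k)%N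
   <= \sum_(2 <= n < X.+1) g n * ln (n%:R : R).
Proof.
move=> g0.
apply: (@le_trans _ _ (\sum_(2 <= d < N.+1) vonMangoldt R d * \sum_(2 <= n < X.+1 | (d %| n)%N) g n)).
  apply: ler_sum_nat => d /andP[d2 _]; apply: ler_wpM2l; first exact: vM_ge0.
  exact: sum_mult.
rewrite (eq_bigr (fun d => \sum_(2 <= n < X.+1) (if (d %| n)%N then vonMangoldt R d * g n else 0))); last first.
  by move=> d _; rewrite mulr_sumr big_mkcond.
rewrite exchange_big_nat /=; apply: ler_sum_nat => n /andP[n2 _].
rewrite -big_mkcond /= -mulr_suml mulrC; apply: ler_wpM2l; first exact: g0.
rewrite -(vM_sum R (ltnW n2)); apply: sum_sub; first exact: vM_ge0.
move=> d /andP[d2 _] dn; rewrite dn andbT ltnS dvdn_leq //; exact: ltnW.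
Qed.

Lemma g_ge0 (R : realType) (L : R) n : 0 < L -> 0 <= VV L n%:R - VV L n.+1%:R.
Proof.
move=> L0; case: n => [|n].
  by rewrite /VV ln0 // ln1 subrr.
by rewrite subr_ge0 VV_anti // ?ler1n // ler_nat.
Qed.

Lemma VVC (R : realType) (L a C : R) : 0 < L -> 0 <= a -> 0 <= C -> C <= a ->
  L * (1 / (L + a)^+2) * C <= L / (L + a).
Proof.
move=> L0 a0 C0 Ca.
have -> : L / (L + a) = L * (1 / (L + a)^+2) * (L + a) by field; rewrite gt_eqF //; lra.
apply: ler_wpM2l; last lra.
apply: mulr_ge0; [exact: ltW | apply: divr_ge0 => //; apply: exprn_ge0; lra].
Qed.

Lemma main_real (R : realType) (L : R) N : 0 < L ->
  \sum_(2 <= d < N.+1) vonMangoldt R d * (VV L d%:R / d%:R)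
   <= 1 - (ln (2%:R : R))^+2 / (L + ln (2%:R:R))^+2.
Proof.
move=> L0.
set C := \sum_(2 <= d < N.+1) vonMangoldt R d / d%:R.
have C0 : 0 <= C by apply: sumr_ge0 => d _; rewrite divr_ge0 ?vM_ge0.
set k := (N + Num.truncn (expR C))%N.
set X := k.+2.
have XN : (N <= X)%N by rewrite /X /k leqW // leqW // leq_addr.
have X1 : 1 <= X%:R :> R by rewrite ler1n.
have lnX : C <= ln (X%:R : R).
  rewrite -{1}(expRK C); apply: ln_mono; first exact: expR_gt0.
  apply: ltW; apply: (lt_le_trans (truncnS_gt _)); rewrite ler_nat /X /k.
  by rewrite ltnS leqW // leq_addl.
have a0 : 0 <= ln (X%:R : R) by rewrite ln_ge0.
pose g n := VV L n%:R - VV L n.+1%:R.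
have step : forall d, (2 <= d < N.+1)%N ->
    vonMangoldt R d * (VV L d%:R / d%:R) <=
    vonMangoldt R d * \sum_(1 <= k < (X %/ d).+1) g (d * k)%N + vonMangoldt R d / d%:R * VV L X%:R.
  move=> d /andP[d2 _]; have d0 : (0 < d)%N by exact: ltnW.
  have dR : 0 < d%:R :> R by rewrite ltr0n.
  rewrite -mulrA -mulrDr; apply: ler_wpM2l; first exact: vM_ge0.
  have h := sumA (X %/ d) L0 d0.
  have h2 : VV L (d * (X %/ d).+1)%:R <= VV L X%:R.
    apply: VV_anti => //; rewrite ler_nat mulnC ltnW // ltn_ceil //.
  rewrite mulrC /g; move: h; rewrite [X in X <= _]mulrC mulrBr => h.
  have h4 : d%:R^-1 * VV L (d * (X %/ d).+1)%:R <= d%:R^-1 * VV L X%:R.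
    by rewrite ler_wpM2l // invr_ge0 ltW.
  lra.
apply: le_trans (ler_sum_nat step) _.
rewrite big_split /= -mulr_suml -/C.
have e := exch N X (fun n => g_ge0 n L0).
have b := sumB_aux k L0.
have vx0 : 0 <= VV L X.+1%:R * ln (X%:R : R).
  apply: mulr_ge0 => //; apply: mulr_ge0; [exact: ltW | apply: divr_ge0 => //; apply: exprn_ge0].
  by rewrite addr_ge0 ?ln_ge0 ?ler1n // ltW.
have vc := VVC L0 a0 C0 lnX.
rewrite /VV in vc vx0 b e *.
rewrite /g /VV in e.
rewrite -/X in b; lra.
Qed.

Lemma ln2_bounds (R : realType) : 1/2 <= ln (2%:R : R) <= 1.
Proof.
apply/andP; split.
  have h := @ln_le_sub1 R (1/2) (divr_gt0 ltr01 (ltr0Sn R 1)).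
  move: h; rewrite div1r lnV ?posrE // => h; lra.
by have := @ln_le_sub1 R 2%:R (ltr0Sn R 1) => h; lra.
Qed.

Lemma ln4 (R : realType) : ln (4%:R : R) = 2 * ln (2%:R : R).
Proof.
have -> : 4%:R = 2%:R * 2%:R :> R by rewrite -natrM.
by rewrite lnM ?posrE // mulr2n mulrDl mul1r.
Qed.

Lemma num_ineq_aux (R : realType) (k : nat) :
  (ln (k.+2%:R : R) + ln (2%:R : R))^+2 <= 4 * (ln (2%:R : R))^+2 * (k.+2%:R - 1).
Proof.
have /andP[c1 c2] := ln2_bounds R.
set c := ln (2%:R : R) in c1 c2 *.
elim: k => [|k IH].
  have -> : ln (R:=R) (0.+2)%:R = c by [].
  have -> : (0.+2%:R : R) - 1 = 1 by rewrite -natr1 addrK.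
  rewrite mulr1; lra.
case: k IH => [_|k IH].
  have h3 : ln (3%:R : R) <= 2 * c - 1/4.
    have h := @ln_le_sub1 R (3%:R / 4%:R) (divr_gt0 (ltr0Sn R 2) (ltr0Sn R 3)).
    rewrite -lnB ?posrE // ln4 -/c in h.
    have e : (3%:R : R) / 4%:R - 1 = - (1/4) by field.
    rewrite e in h.
    lra.
  have h0 : 0 <= ln (3%:R : R) by rewrite ln_ge0 // ler1n.
  have -> : (3%:R : R) - 1 = 2 by rewrite -natr1 addrK.
  have hh : (ln (3%:R : R) + c) ^+ 2 <= (3 * c - 1/4)^+2.
    rewrite ler_sqr ?nnegrE; lra.
  apply: le_trans hh _; nra.
set x := k.+3%:R : R.
have x3 : 3%:R <= x by rewrite /x ler_nat.
have x0 : 0 < x by lra.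
set l0 := ln x; set l1 := ln (k.+4%:R : R).
have e1 : k.+4%:R = x + 1 :> R by rewrite /x -natr1.
have t0 : 0 <= l1 - l0 by rewrite subr_ge0 /l0 /l1 e1 ln_mono // lerDl.
have t1 : (l1 - l0) * x <= 1.
  have x1 : 0 < x + 1 by lra.
  rewrite /l1 /l0 e1 (lnB x1 x0).
  have h := ln_le_sub1 (divr_gt0 x1 x0).
  have e : (x + 1) / x - 1 = 1 / x by field; rewrite gt_eqF.
  rewrite e in h.
  by rewrite -ler_pdivlMr // div1r -div1r.
have l1b : l1 <= 2 * c + (x - 3) / 4.
  have h := ln_le_sub1 (divr_gt0 (addr_gt0 x0 ltr01) (ltr0Sn R 3)).
  rewrite -lnB ?posrE ?addr_gt0 // ln4 -/c -e1 -/l1 in h; lra.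
have l0p : 0 <= l0 by rewrite ln_ge0 //; lra.
have key1 : l1 + l0 + 2 * c <= 4 * c^+2 * x.
  have : l0 <= l1 by lra.
  have p1 : 0 <= (x - 3) * (4 * c^+2 - 1/2) by apply: mulr_ge0; nra.
  have p2 : 0 <= c * (2 * c - 1) by apply: mulr_ge0; lra.
  nra.
have key : (l1 - l0) * (l1 + l0 + 2 * c) <= 4 * c^+2.
  apply: le_trans (_ : (l1 - l0) * (4 * c^+2 * x) <= _).
    by apply: ler_wpM2l.
  rewrite mulrCA; rewrite -[X in _ <= X]mulr1; apply: ler_wpM2l; first nra.
  exact: t1.
have -> : (k.+4%:R : R) - 1 = (x - 1) + 1 by rewrite e1; ring.
have e2 : (l1 + c)^+2 = (l0 + c)^+2 + (l1 - l0) * (l1 + l0 + 2 * c) by ring.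
rewrite -/l1 e2; rewrite -/x -/l0 in IH; nra.
Qed.

Lemma nu0_ge0 (R : realType) n : 0 <= nu0 R n.
Proof.
rewrite /nu0; case: n => [|n]; first by rewrite mul0r div1r invr0.
by rewrite divr_ge0 // mulr_ge0 // ln_ge0 // ler1n.
Qed.

Lemma not_prime_mul m q : (1 < m)%N -> (1 < q)%N -> prime (m * q) = false.
Proof.
move=> m1 q1; apply/negP => /primeP [_ /(_ m (dvdn_mulr _ (dvdnn m)))] /orP[] /eqP e.
  by move: m1; rewrite e.
by move: q1; have := e; rewrite -{1}(muln1 m) => /eqP; rewrite eqn_mul2l gtn_eqF ?(ltnW m1) // => /eqP <-.
Qed.

Lemma trans_bound (R : realType) m q M : (1 < m)%N -> (1 < q)%N -> (q <= M)%N ->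
  let G := nu0 R (m * q)%N * (vonMangoldt R q / ln ((m * q)%N%:R : R)) in
  0 <= nu0 R (m * q)%N * trans R (m * q)%N m /\
  nu0 R (m * q)%N * trans R (m * q)%N m <=
    G + (if prime m then \sum_(1 <= j < M.+1) (if q == (m ^ j)%N then G else 0) else 0).
Proof.
move=> m1 q1 qM G.
have mq1 : (1 < m * q)%N by rewrite (leq_trans m1) // leq_pmulr // ltnW.
have lnmq : 0 < ln ((m * q)%N%:R : R) by rewrite -ln1 ltr_ln ?posrE ?ltr0n ?ltr1n // (ltnW mq1).
have G0 : 0 <= G by rewrite mulr_ge0 ?nu0_ge0 // divr_ge0 ?vM_ge0 // ltW.
have X0 : 0 <= (if prime m then \sum_(1 <= j < M.+1) (if q == (m ^ j)%N then G else 0) else 0).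
  by case: ifP => // _; apply: sumr_ge0 => j _; case: ifP.
rewrite /trans not_prime_mul //.
case: ifP => pp.
  move: pp => /existsP [p /existsP [k /andP[/andP[pp k1] /eqP e]]].
  move: (nat_of_ord k) (nat_of_ord p) pp k1 e => {k p} k p pp k1 e.
  have p1 := prime_gt1 pp.
  have [k' ek] : exists k', k = k'.+1 by exists k.-1; rewrite prednK // ltnW.
  rewrite e ek pdiv_pfactor // pfactorK //.
  rewrite -ek -e.
  have qd : (q %| p ^ k)%N by rewrite -e dvdn_mull.
  have md : (m %| p ^ k)%N by rewrite -e dvdn_mulr.
  case/(dvdn_pfactor _ _ pp): qd => j jk qj.
  case/(dvdn_pfactor _ _ pp): md => i ik mi.
  have j0 : (0 < j)%N by case: j qj {jk} => // qj; move: q1; rewrite qj.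
  have kR : 0 < (k)%:R :> R by rewrite ltr0n (leq_trans _ k1).
  have lnp : 0 < ln (p%:R : R) by rewrite -ln1 ltr_ln ?posrE ?ltr0n ?ltr1n // ltnW.
  have GE : G = nu0 R (m * q)%N / (k)%:R.
    rewrite /G qj vM_pow // -qj e natrX lnXn ?ltr0n ?(ltnW p1) //.
    rewrite -mulr_natr; congr (_ * _); field; rewrite ?mul1r; do ?[apply/andP; split]; rewrite gt_eqF //.
  have nu0k : 0 <= nu0 R (m * q)%N / (k)%:R by rewrite divr_ge0 ?nu0_ge0 // ltW.
  case: (m =P p) => [mp|mp].
    have mpr : prime m by rewrite mp.
    split; first by rewrite mulr_ge0 ?nu0_ge0 // divr_ge0 // ltW.
    rewrite mpr.
    rewrite -big_mkcond /= (eq_bigl (fun j' => j' == j)); last first.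
      by move=> j'; rewrite qj mp eqn_exp2l // eq_sym.
    rewrite big_nat1_eq j0 /= ltnS (leq_trans _ qM); last by rewrite qj ltnW // ltn_expl.
    by rewrite GE le_eqVlt; apply/orP; left; apply/eqP; ring.
  case: ifP => _.
    split; first by rewrite mulr_ge0 ?nu0_ge0 // divr_ge0 // ltW.
    apply: le_trans (_ : G <= _); last by rewrite lerDl.
    by rewrite GE mulrA mulr1.
  by rewrite mulr0; split => //; rewrite addr_ge0.
rewrite (eq_bigl (fun q0 => q0 == q)); last first.
  move=> q0; apply/andP/eqP => [[d /eqP e]|->]; last by rewrite dvdn_mull // mulnK // ltnW.
  case: (posnP q0) d => [->|q00 d]; first by rewrite dvd0n gtn_eqF // ltnW.
  have : (m * q0 = m * q)%N by rewrite [in LHS]e divnK.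
  by move/eqP; rewrite eqn_mul2l gtn_eqF ?(ltnW m1) //= => /eqP.
rewrite big_nat1_eq q1 /= ltnS leq_pmull ?(ltnW m1) //.
rewrite -/G.
by split => //; rewrite lerDl.
Qed.

Lemma G_eq (R : realType) m q : (1 < m)%N -> (0 < q)%N ->
  nu0 R (m * q)%N * (vonMangoldt R q / ln ((m * q)%N%:R : R)) =
  nu0 R m * (vonMangoldt R q * (VV (ln (m%:R : R)) q%:R / q%:R)).
Proof.
move=> m1 q0.
have L0 : 0 < ln (m%:R : R) by rewrite -ln1 ltr_ln ?posrE ?ltr0n ?ltr1n // ltnW.
have lq : 0 <= ln (q%:R : R) by rewrite ln_ge0 // ler1n.
have mR : 0 < m%:R :> R by rewrite ltr0n ltnW.
have qR : 0 < q%:R :> R by rewrite ltr0n.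
rewrite /nu0 /VV natrM lnM ?posrE //.
field.
have h : 0 < ln (m%:R : R) + ln (q%:R : R) by lra.
by rewrite !gt_eqF ?mulr_gt0.
Qed.

Lemma geo (R : realType) (x : R) n : 1 < x ->
  \sum_(1 <= j < n.+1) 1 / x ^+ j <= 1 / (x - 1).
Proof.
move=> x1.
have x0 : 0 < x by lra.
suff : \sum_(1 <= j < n.+1) 1 / x ^+ j + 1 / ((x - 1) * x ^+ n) = 1 / (x - 1).
  move=> <-; rewrite lerDl divr_ge0 // mulr_ge0 ?exprn_ge0 //; lra.
elim: n => [|n IH]; first by rewrite big_geq // add0r expr0 mulr1.
rewrite big_nat_recr //= -IH -addrA; congr (_ + _).
rewrite exprS; field.
by rewrite !gt_eqF ?exprn_gt0 //; lra.
Qed.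

Lemma VV_ge0 (R : realType) (L x : R) : 0 < L -> 1 <= x -> 0 <= VV L x.
Proof.
move=> L0 x1; rewrite /VV; apply: mulr_ge0; first exact: ltW.
apply: divr_ge0 => //; apply: exprn_ge0; apply: addr_ge0; [exact: ltW | exact: ln_ge0].
Qed.

Lemma partial (R : realType) m N : (1 < m)%N ->
  \sum_(2 <= q < N.+1) nu0 R (m * q)%N * trans R (m * q)%N m <= nu0 R m.
Proof.
move=> m1.
set L := ln (m%:R : R).
have L0 : 0 < L by rewrite -ln1 ltr_ln ?posrE ?ltr0n ?ltr1n // ltnW.
have mR : 1 < m%:R :> R by rewrite ltr1n.
have nm0 : 0 <= nu0 R m by exact: nu0_ge0.
pose G q := nu0 R (m * q)%N * (vonMangoldt R q / ln ((m * q)%N%:R : R)).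
have G0 : forall q, (0 < q)%N -> 0 <= G q.
  move=> q q0; rewrite /G G_eq //; apply: mulr_ge0 => //; apply: mulr_ge0; first exact: vM_ge0.
  by apply: divr_ge0 => //; apply: VV_ge0; rewrite // ler1n.
apply: le_trans (_ : \sum_(2 <= q < N.+1) (G q + (if prime m then
    \sum_(1 <= j < N.+1) (if q == (m ^ j)%N then G q else 0) else 0)) <= _).
  apply: ler_sum_nat => q /andP[q1 qN].
  by have /= [] := @trans_bound R m q N m1 q1 qN.
rewrite big_split /=.
have main : \sum_(2 <= q < N.+1) G q <= nu0 R m * (1 - (ln (2%:R : R))^+2 / (L + ln (2%:R:R))^+2).
  rewrite (eq_big_nat _ _ (F2 := fun q => nu0 R m * (vonMangoldt R q * (VV L q%:R / q%:R)))); last first.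
    by move=> q /andP[q1 _]; rewrite /G G_eq // ltnW.
  by rewrite -mulr_sumr ler_wpM2l // main_real.
have s0 : 0 <= (ln (2%:R : R))^+2 / (L + ln (2%:R:R))^+2.
  have c0 : 0 <= ln (2%:R : R) by apply: ln_ge0; rewrite ler1n.
  by apply: divr_ge0; apply: exprn_ge0 => //; apply: addr_ge0 => //; exact: ltW.
case: (boolP (prime m)) => mp /=; last first.
  rewrite big1_eq addr0.
  apply: le_trans main _; rewrite ler_piMr //; lra.
have extra : \sum_(2 <= q < N.+1) \sum_(1 <= j < N.+1) (if q == (m ^ j)%N then G q else 0)
    <= nu0 R m * (1 / 4 / (m%:R - 1)).
  rewrite exchange_big_nat /=.
  apply: le_trans (_ : \sum_(1 <= j < N.+1) nu0 R m * (1 / 4 * (1 / m%:R ^+ j)) <= _); last first.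
    rewrite -mulr_sumr; apply: ler_wpM2l => //; rewrite -mulr_sumr; apply: ler_wpM2l => //.
    by have := geo N mR; rewrite div1r.
  apply: ler_sum_nat => j /andP[j1 _].
  rewrite -big_mkcond /= big_nat1_eq; case: ifP => _; last first.
    by rewrite mulr_ge0 // mulr_ge0 // divr_ge0 // exprn_ge0 // ltW.
  rewrite /G G_eq ?expn_gt0 ?(ltnW m1) // ler_wpM2l // vM_pow // /VV natrX lnXn ?ltr0n ?(ltnW m1) // -/L.
  have -> : L * (L * (1 / (L + L *+ j) ^+ 2) / m%:R ^+ j) = 1 / (j.+1%:R)^+2 * (1 / m%:R ^+ j).
    rewrite -mulr_natr -natr1; field; rewrite !gt_eqF ?exprn_gt0 //; try lra.
    have hj : 0 < L * j%:R by rewrite mulr_gt0 // ltr0n. lra.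
  apply: ler_wpM2r; first by rewrite divr_ge0 // exprn_ge0 // ltW.
  rewrite !div1r lef_pV2 ?posrE ?exprn_gt0 ?ltr0n //.
  by rewrite (_ : 4 = 2%:R ^+ 2) ?lerXn2r ?nnegrE ?ler_nat // -natrX.
apply: le_trans (lerD main extra) _.
rewrite -mulrDr ler_piMr //.
have := num_ineq_aux R (m - 2).
have -> : (m - 2).+2 = m by rewrite -addn2 subnK.
rewrite -/L => h.
have c0 : 0 < ln (2%:R : R) by rewrite -ln1 ltr_ln ?posrE ?ltr0n ?ltr1n.
have k1 : 0 < m%:R - 1 :> R by lra.
have Lp : 0 < (L + ln (2%:R : R)) ^+ 2 by rewrite exprn_gt0 // addr_gt0.
suff : 1 / 4 / (m%:R - 1) <= ln (2%:R : R) ^+ 2 / (L + ln (2%:R : R)) ^+ 2 by lra.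
rewrite ler_pdivrMr // mulrAC ler_pdivlMr //.
rewrite -mulrA; apply: le_trans (_ : 1 / 4 * (4 * ln (2%:R : R) ^+ 2 * (m%:R - 1)) <= _).
  rewrite !mul1r; apply: ler_wpM2l => //; rewrite invr_ge0 ler0n.
have e4 : (4 : R) != 0 by rewrite pnatr_eq0.
by rewrite div1r -!mulrA mulKf.
Qed.

Unset Implicit Arguments.

Theorem lemma5p1 (R : realType) (m : nat) : (1 < m)%N ->
  (\sum_(2 <= q <oo) ((nu0 R (m * q) * trans R (m * q) m)%:E) <= (nu0 R m)%:E)%E.
Proof.
move=> m1.
have a0 : forall q, (2 <= q)%N -> (0 <= (nu0 R (m * q) * trans R (m * q) m)%:E)%E.
  move=> q q2; rewrite lee_fin.
  by have /= [] := @trans_bound R m q q m1 q2 (leqnn q).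
apply: lime_le.
  by apply: is_cvg_nneseries => q q2 _; exact: a0.
apply: nearW => n.
rewrite sumEFin lee_fin.
case: n => [|N]; first by rewrite big_geq // nu0_ge0.
exact: partial.
Qed.
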